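(* Let $q>2$ be a prime power, $h\geq 2$, and let $\mathcal{L}_1,\mathcal{L}_2,\mathcal{L}_3$ be pairwise disjoint blocking sets of $\mathrm{PG}(2,q^h)$, each projectively equivalent to $\{(x:\mathrm{Tr}_{q^h/q}(x):y): x\in\mathbb{F}_{q^h},\ y\in\mathbb{F}_q,\ (x,y)\neq(0,0)\}$. Then $\mathcal{L}_1\cup\mathcal{L}_2\cup\mathcal{L}_3$ is a minimal $3$-fold blocking set.
   Context: $\mathrm{Tr}_{q^h/q}(x)=x+x^q+\dots+x^{q^{h-1}}$. A $t$-fold blocking set is a point set meeting every line in at least $t$ points; it is minimal if it contains no smaller $t$-fold blocking set (equivalently, each of its points lies on a line meeting it in exactly $t$ points). *)

(* Defs.v *)
From HB Require Import structures.
From mathcomp Require Import all_boot all_order all_algebra.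
Set Implicit Arguments. Unset Strict Implicit. Unset Printing Implicit Defensive.
Import GRing.Theory.
Local Open Scope ring_scope.

(* Projective plane PG(2,K) over a finite field K.  A point (and, dually, a
   line) is represented by its unique normalized homogeneous coordinate
   vector: the first nonzero coordinate equals 1. *)
Definition normalized (K : finFieldType) (v : 'rV[K]_3) : bool :=
  [|| v 0 0 == 1,
      (v 0 0 == 0) && (v 0 1 == 1) |
      [&& v 0 0 == 0, v 0 1 == 0 & v 0 2 == 1]].

Definition point (K : finFieldType) := {v : 'rV[K]_3 | normalized v}.
Definition line (K : finFieldType) := {v : 'rV[K]_3 | normalized v}.

Definition incident (K : finFieldType) (p : point K) (l : line K) : bool :=
  \sum_(i < 3) (val p) 0 i * (val l) 0 i == 0.

Definition meet_card (K : finFieldType) (S : {set point K}) (l : line K) : nat :=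
  #|[set p in S | incident p l]|.

Definition tfold_blocking (K : finFieldType) (t : nat) (S : {set point K}) : Prop :=
  forall l : line K, (t <= meet_card S l)%N.

Definition blocking_set (K : finFieldType) (S : {set point K}) : Prop :=
  tfold_blocking 1 S.

Definition minimal_tfold_blocking (K : finFieldType) (t : nat) (S : {set point K}) : Prop :=
  tfold_blocking t S /\
  forall S' : {set point K}, S' \proper S -> ~ tfold_blocking t S'.

Definition prime_power (q : nat) : Prop :=
  exists p k : nat, prime p /\ (0 < k)%N /\ q = (p ^ k)%N.

Definition trace (K : finFieldType) (q h : nat) (x : K) : K :=
  \sum_(i < h) x ^+ (q ^ i).

Definition represents (K : finFieldType) (p : point K) (w : 'rV[K]_3) : bool :=
  [exists c : K, (c != 0) && (val p == c *: w)].

(* The standard set {(x : Tr(x) : y) | x in F_{q^h}, y in F_q, (x,y) != (0,0)};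
   F_q is the subfield {y | y^q = y} of K (where #|K| = q^h). *)
Definition std_set (K : finFieldType) (q h : nat) : {set point K} :=
  [set p : point K | [exists x : K, exists y : K,
      [&& y ^+ q == y, (x, y) != (0, 0) &
          represents p (\row_(j < 3) [:: x; trace q h x; y]`_j)]]].

Definition proj_equiv_std (K : finFieldType) (q h : nat) (S : {set point K}) : Prop :=
  exists A : 'M[K]_3, A \in unitmx /\
    forall p : point K,
      p \in S <-> exists2 s : point K, s \in @std_set K q h & represents p (val s *m A).

(* Main.v *)
Require Import Defs.
From HB Require Import structures.
From mathcomp Require Import all_boot all_order all_algebra all_field.
From mathcomp Require Import zify ring.
Set Implicit Arguments. Unset Strict Implicit. Unset Printing Implicit Defensive.
Import GRing.Theory.
Local Open Scope ring_scope.

Definition dot (K : finFieldType) (u v : 'rV[K]_3) : K := \sum_(i < 3) u 0 i * v 0 i.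

Lemma dotE (K : finFieldType) (u v : 'rV[K]_3) : dot u v = u 0 0 * v 0 0 + u 0 1 * v 0 1 + u 0 2 * v 0 2.
Proof.
rewrite /dot !big_ord_recl big_ord0 addr0 addrA.
have e0 : (ord0 : 'I_3) = 0 by apply/val_inj.
have e1 : (lift ord0 ord0 : 'I_3) = 1 by apply/val_inj.
have e2 : (lift ord0 (lift ord0 ord0) : 'I_3) = 2 by apply/val_inj.
by rewrite e0 e1 e2.
Qed.

Lemma row3P (K : finFieldType) (u v : 'rV[K]_3) : u 0 0 = v 0 0 -> u 0 1 = v 0 1 -> u 0 2 = v 0 2 -> u = v.
Proof.
move=> h0 h1 h2; apply/rowP => i; case: i => [[|[|[|//]]] Hi].
- by rewrite (_ : Ordinal Hi = 0) //; apply/val_inj.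
- by rewrite (_ : Ordinal Hi = 1) //; apply/val_inj.
- by rewrite (_ : Ordinal Hi = 2) //; apply/val_inj.
Qed.

Definition mk3 (K : finFieldType) (a b c : K) : 'rV[K]_3 := \row_(j < 3) [:: a; b; c]`_j.
Lemma mk3E (K : finFieldType) (a b c : K) : (mk3 a b c) 0 0 = a /\ (mk3 a b c) 0 1 = b /\ (mk3 a b c) 0 2 = c.
Proof. by rewrite /mk3 !mxE. Qed.
Lemma scale3 (K : finFieldType) (c : K) (u : 'rV[K]_3) i : (c *: u) 0 i = c * u 0 i.
Proof. by rewrite mxE. Qed.

Lemma normP (K : finFieldType) (u : 'rV[K]_3) : normalized u ->
  [\/ u 0 0 = 1, u 0 0 = 0 /\ u 0 1 = 1 | [/\ u 0 0 = 0, u 0 1 = 0 & u 0 2 = 1]].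
Proof.
case/or3P => [/eqP->|/andP[/eqP-> /eqP->]|/and3P[/eqP-> /eqP-> /eqP->]];
by [constructor 1 | constructor 2 | constructor 3].
Qed.

Lemma norm_prop (K : finFieldType) (u v : 'rV[K]_3) (c : K) :
  normalized u -> normalized v -> u = c *: v -> u = v.
Proof.
move=> nu nv E.
have h0 : u 0 0 = c * v 0 0 by rewrite E scale3.
have h1 : u 0 1 = c * v 0 1 by rewrite E scale3.
have h2 : u 0 2 = c * v 0 2 by rewrite E scale3.
suff c1 : c = 1 by rewrite E c1 scale1r.
have o1 : (1 : K) != 0 := oner_neq0 K.
case/normP: nu => [a0|[a0 a1]|[a0 a1 a2]]; case/normP: nv => [b0|[b0 b1]|[b0 b1 b2]];
  rewrite ?a0 ?a1 ?a2 ?b0 ?b1 ?b2 ?mulr0 ?mulr1 in h0 h1 h2 => //;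
  try (by rewrite h0); try (by rewrite h1); try (by rewrite h2);
  try (by move: o1; rewrite ?h0 ?h1 ?h2 eqxx);
  try (by move: o1; rewrite h2 -h0 mul0r eqxx);
  try (by move: o1; rewrite h2 -h1 mul0r eqxx);
  try (by move: o1; rewrite h1 -h0 mul0r eqxx).
Qed.

Lemma repP (K : finFieldType) (p : point K) w :
  reflect (exists2 c, c != 0 & val p = c *: w) (represents p w).
Proof.
apply: (iffP existsP) => [[c /andP[c0 /eqP E]]|[c c0 E]]; exists c => //.
by rewrite c0 E eqxx.
Qed.

Lemma norm_neq0 (K : finFieldType) (u : 'rV[K]_3) : normalized u -> u != 0.
Proof.
move=> nu; apply/eqP => u0; move: nu; rewrite u0 /normalized !mxE.
by rewrite eqxx eq_sym (negbTE (oner_neq0 K)).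
Qed.

Lemma rep_neq0 (K : finFieldType) (p : point K) w : represents p w -> w != 0.
Proof.
case/repP => c c0 E; apply/eqP => w0; move: (norm_neq0 (valP p)).
by rewrite E w0 scaler0 eqxx.
Qed.

Lemma rep_scale (K : finFieldType) (p : point K) w a :
  represents p w -> a != 0 -> represents p (a *: w).
Proof.
case/repP => c c0 E a0; apply/repP; exists (c / a).
  by rewrite mulf_neq0 // invr_eq0.
by rewrite scalerA mulfVK.
Qed.

Lemma rep_scaleV (K : finFieldType) (p : point K) w a :
  represents p (a *: w) -> represents p w.
Proof.
move=> r; have a0 : a != 0.
  by apply/eqP=> a0; move: (rep_neq0 r); rewrite a0 scale0r eqxx.
by have := rep_scale r (invr_neq0 a0); rewrite scalerA mulVf // scale1r.
Qed.

Lemma rep_val (K : finFieldType) (p : point K) : represents p (val p).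
Proof. by apply/repP; exists 1; rewrite ?oner_neq0 ?scale1r. Qed.

Lemma rep_uniq (K : finFieldType) (p p' : point K) w :
  represents p w -> represents p' w -> p = p'.
Proof.
case/repP => c c0 E; case/repP => c' c0' E'; apply/val_inj.
apply: (@norm_prop _ _ _ (c / c') (valP p) (valP p')).
by rewrite E E' scalerA mulfVK.
Qed.

Lemma rep_ex (K : finFieldType) (w : 'rV[K]_3) : w != 0 -> exists p : point K, represents p w.
Proof.
move=> w0.
have [a a0 na] : exists2 a : K, a != 0 & normalized (a *: w).
  case: (eqVneq (w 0 0) 0) => e0.
    case: (eqVneq (w 0 1) 0) => e1.
      case: (eqVneq (w 0 2) 0) => e2.
        by move: w0; rewrite (@row3P _ w 0) ?eqxx // mxE.
      exists (w 0 2)^-1; first by rewrite invr_eq0.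
      by rewrite /normalized !scale3 e0 e1 mulr0 mulVf // !eqxx /= ?orbT ?andbT ?orbT.
    exists (w 0 1)^-1; first by rewrite invr_eq0.
    by rewrite /normalized !scale3 e0 mulr0 mulVf // !eqxx /= ?orbT ?andbT ?orbT.
  exists (w 0 0)^-1; first by rewrite invr_eq0.
  by rewrite /normalized !scale3 mulVf // eqxx.
by exists (exist (fun v => normalized v) _ na : point K); apply/repP; exists a.
Qed.

Lemma dotZl (K : finFieldType) (a : K) u v : dot (a *: u) v = a * dot u v.
Proof. by rewrite !dotE !scale3; ring. Qed.
Lemma dotDl (K : finFieldType) (u u' v : 'rV[K]_3) : dot (u + u') v = dot u v + dot u' v.
Proof. by rewrite !dotE !mxE; ring. Qed.
Lemma dotC (K : finFieldType) (u v : 'rV[K]_3) : dot u v = dot v u.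
Proof. by rewrite !dotE; ring. Qed.

Lemma rep_inc (K : finFieldType) (p : point K) w (l : line K) :
  represents p w -> incident p l = (dot w (val l) == 0).
Proof.
case/repP => c c0 E; rewrite /incident -/(dot (val p) (val l)) E dotZl.
by rewrite mulf_eq0 (negbTE c0).
Qed.

Definition cross (K : finFieldType) (p q : 'rV[K]_3) : 'rV[K]_3 :=
  mk3 (p 0 1 * q 0 2 - p 0 2 * q 0 1) (p 0 2 * q 0 0 - p 0 0 * q 0 2)
      (p 0 0 * q 0 1 - p 0 1 * q 0 0).

Lemma cross_dotl (K : finFieldType) (p q : 'rV[K]_3) : dot (cross p q) p = 0.
Proof. by rewrite dotE /cross /mk3 !mxE /=; ring. Qed.
Lemma cross_dotr (K : finFieldType) (p q : 'rV[K]_3) : dot (cross p q) q = 0.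
Proof. by rewrite dotE /cross /mk3 !mxE /=; ring. Qed.

Lemma cross_triple (K : finFieldType) (l p q : 'rV[K]_3) :
  cross l (cross p q) = (dot l q) *: p - (dot l p) *: q.
Proof. by apply: row3P; rewrite !dotE /cross /mk3 !mxE /=; ring. Qed.

Lemma cross0 (K : finFieldType) (u v : 'rV[K]_3) :
  normalized u -> cross u v = 0 -> exists a, v = a *: u.
Proof.
move=> nu E.
have h0 := congr1 (fun w : 'rV[K]_3 => w 0 0) E; have h1 := congr1 (fun w : 'rV[K]_3 => w 0 1) E;
have h2 := congr1 (fun w : 'rV[K]_3 => w 0 2) E.
rewrite /cross /mk3 /= !mxE /= in h0 h1 h2.
case/normP: nu => [a0|[a0 a1]|[a0 a1 a2]];
  rewrite ?a0 ?a1 ?a2 in h0 h1 h2;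
  [exists (v 0 0) | exists (v 0 1) | exists (v 0 2)];
  apply: row3P; rewrite !scale3 ?a0 ?a1 ?a2 ?mulr1 ?mulr0 //;
  apply/subr0_eq;
  first [ by rewrite -[RHS]h0; ring | by rewrite -[RHS]h1; ring | by rewrite -[RHS]h2; ring
        | by rewrite -[RHS]oppr0 -[X in _ = - X]h0; ring
        | by rewrite -[RHS]oppr0 -[X in _ = - X]h1; ring
        | by rewrite -[RHS]oppr0 -[X in _ = - X]h2; ring ].
Qed.

Lemma cross_neq0 (K : finFieldType) (P Q : point K) : P != Q -> cross (val P) (val Q) != 0.
Proof.
move=> PQ; apply/eqP => E; case: (cross0 (valP P) E) => a Ea.
have := norm_prop (valP Q) (valP P) Ea => /val_inj QP.
by rewrite QP eqxx in PQ.
Qed.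

Lemma line_through2 (K : finFieldType) (P Q : point K) : P != Q ->
  #|[set l : line K | incident P l && incident Q l]| = 1%N.
Proof.
move=> PQ; have c0 := cross_neq0 PQ.
have [l rl] := rep_ex c0.
have Hl : forall l' : line K, incident P l' -> incident Q l' -> l' = l.
  move=> l' iP iQ.
  have e1 : cross (val l') (cross (val P) (val Q)) = 0.
    move: iP iQ; rewrite /incident -/(dot (val P) (val l')) -/(dot (val Q) (val l')).
    by rewrite cross_triple dotC => /eqP-> ; rewrite dotC => /eqP->; rewrite !scale0r subr0.
  have [a Ea] := cross0 (valP l') e1.
  apply: (rep_uniq _ rl); rewrite Ea; apply: rep_scale; first exact: rep_val.
  by apply/eqP => a0; move: c0; rewrite Ea a0 scale0r eqxx.
rewrite (_ : [set l0 | _] = [set l]) ?cards1 //; apply/setP => l0; rewrite !inE.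
apply/idP/idP => [/andP[iP iQ]|/eqP->]; first by rewrite (Hl _ iP iQ).
case/repP: rl => c cn0 E.
rewrite /incident -/(dot (val P) (val l)) -/(dot (val Q) (val l)) E.
by rewrite !(dotC _ (c *: _)) !dotZl cross_dotl cross_dotr mulr0 eqxx.
Qed.

Lemma exists_e (K : finFieldType) (P : point K) : exists e, dot e (val P) = 1.
Proof.
case/normP: (valP P) => [a0|[a0 a1]|[a0 a1 a2]].
- by exists (mk3 1 0 0); rewrite dotE /mk3 !mxE /= a0; ring.
- by exists (mk3 0 1 0); rewrite dotE /mk3 !mxE /= a1; ring.
- by exists (mk3 0 0 1); rewrite dotE /mk3 !mxE /= a2; ring.
Qed.

Lemma cardN (K : finFieldType) (P : point K) :
  (#|[set v : 'rV[K]_3 | dot v (val P) == 0%R]| * #|K| = #|K| ^ 3)%N.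
Proof.
have [e He] := exists_e P.
set N := [set v | _].
pose f (x : 'rV[K]_3 * K) := x.1 + x.2 *: e.
have inj : {in setX N [set: K] &, injective f}.
  move=> [v c] [v' c'] /setXP[/= vN _] /setXP[/= vN' _]; rewrite /f /= => E.
  have cc : c = c'.
    have := congr1 (fun w => dot w (val P)) E; rewrite /= !dotDl !dotZl He.
    by move: vN vN'; rewrite !inE => /eqP-> /eqP->; rewrite !add0r !mulr1.
  by move: E; rewrite cc => /addIr->.
have im : f @: (setX N [set: K]) = [set: 'rV[K]_3].
  apply/setP => u; rewrite inE; apply/imsetP.
  exists (u - (dot u (val P)) *: e, dot u (val P)); last by rewrite /f /= subrK.
  apply/setXP; split; rewrite ?inE //=.
  by rewrite dotDl dotC -scaleNr dotC dotZl He mulr1 dotC addrN.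
have := card_in_imset inj; rewrite im cardsX !cardsT => <-. rewrite card_mx.
by [].
Qed.

Lemma card_lines_through (K : finFieldType) (P : point K) :
  #|[set l : line K | incident P l]| = (#|K|).+1.
Proof.
set T := [set l : line K | _].
set N := [set v : 'rV[K]_3 | dot v (val P) == 0].
pose f (x : line K * K) := x.2 *: val x.1.
have inj : {in setX T [set~ 0] &, injective f}.
  move=> [l c] [l' c'] /setXP[/= _ c0] /setXP[/= _ c0']; rewrite /f /= => E.
  rewrite !inE in c0 c0'.
  have ll : l = l'.
    apply: (@rep_uniq _ l l' (val l)); first exact: rep_val.
    apply: (@rep_scaleV _ _ _ c); rewrite E; apply: rep_scale => //; exact: rep_val.
  rewrite ll in E *; congr (_, _).
  have : (c - c') *: val l' == 0 by rewrite scalerBl E subrr.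
  by rewrite scaler_eq0 (negbTE (norm_neq0 (valP l'))) orbF subr_eq0 => /eqP.
have im : f @: (setX T [set~ 0]) = N :\ 0.
  apply/setP => u; rewrite !inE; apply/imsetP/andP.
    case=> [[l c]] /setXP[/=]; rewrite !inE /f /= => iP c0 ->.
    split; first by rewrite scaler_eq0 negb_or c0 norm_neq0 // (valP l).
    by rewrite (rep_inc _ (rep_val P)) in iP; rewrite dotZl dotC (eqP iP) mulr0.
  case=> u0 uN; have [l rl] := rep_ex u0.
  case/repP: (rl) => c c0 E.
  exists (l, c^-1); last by rewrite /f /= E scalerA mulVf // scale1r.
  apply/setXP; rewrite !inE invr_eq0 c0; split => //.
  by rewrite (rep_inc _ (rep_val P)) E dotC dotZl (eqP uN) mulr0.
have := card_in_imset inj; rewrite im cardsX cardsC1.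
have -> : #|N :\ 0| = (#|N| - 1)%N.
  rewrite (cardsD1 0 N) (_ : 0 \in N) ?addKn //.
  by rewrite inE dotE !mxE; apply/eqP; ring.
move=> E.
have n1 : (1 < #|K|)%N := finNzRing_gt1 K.
have cN := cardN P; rewrite -/N in cN.
have NE : #|N| = (#|K| ^ 2)%N.
  apply/eqP; rewrite -(@eqn_pmul2r #|K|) ?(ltn_trans _ n1) //.
  by rewrite cN -expnSr.
rewrite NE in E.
move: E; set n := #|K|; set t := #|T|; move: n1; clear.
move=> n1 E.
have H : (n.+1 * n.-1 = n ^ 2 - 1)%N by rewrite expnS expn1; case: n n1 E => // m; nia.
apply/eqP; rewrite -(@eqn_pmul2r n.-1); last by move: n1; clear; lia.
by rewrite H E.
Qed.

Lemma sum_bool (T : finType) (A : {set T}) (b : pred T) :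
  (\sum_(x in A) (b x : nat) = #|[set x in A | b x]|)%N.
Proof.
rewrite -sum1_card big_mkcond [RHS]big_mkcond /=; apply: eq_bigr => x _.
by rewrite inE; case: (x \in A); case: (b x).
Qed.

Lemma sum_lines (K : finFieldType) (P : point K) (S : {set point K}) : P \notin S ->
  (\sum_(l in [set l : line K | incident P l]) #|[set Q in S | incident Q l]| = #|S|)%N.
Proof.
move=> PS.
rewrite (eq_bigr (fun l => \sum_(Q in S) (incident Q l : nat))); last first.
  by move=> l _; rewrite sum_bool.
rewrite exchange_big /= -sum1_card; apply: eq_bigr => Q QS.
rewrite (eq_bigl (fun l => l \in [set l : line K | incident P l])) //.
have PQ : P != Q by apply/eqP => PQ; rewrite PQ QS in PS.
rewrite sum_bool -[RHS](line_through2 PQ).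
by apply: eq_card => l; rewrite !inE.
Qed.

Lemma key (K : finFieldType) (q : nat) (P : point K) (L1 L2 L3 : {set point K}) :
  (2 < q)%N -> P \in L1 -> P \notin L2 -> P \notin L3 ->
  (forall l, 1 <= meet_card L2 l)%N -> (forall l, 1 <= meet_card L3 l)%N ->
  (forall l, 1 < meet_card L1 l -> q < meet_card L1 l)%N ->
  (forall l, 1 < meet_card L2 l -> q < meet_card L2 l)%N ->
  (forall l, 1 < meet_card L3 l -> q < meet_card L3 l)%N ->
  ((q - 1) * #|L1| <= #|K| * q - 1)%N ->
  ((q - 1) * #|L2| <= #|K| * q - 1)%N ->
  ((q - 1) * #|L3| <= #|K| * q - 1)%N ->
  exists l : line K, [&& incident P l, meet_card L1 l == 1%N,
                        meet_card L2 l == 1%N & meet_card L3 l == 1%N].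
Proof.
move=> q2 P1 P2 P3 b2 b3 g1 g2 g3 s1 s2 s3.
case: (boolP [exists l : line K, [&& incident P l, meet_card L1 l == 1%N,
                        meet_card L2 l == 1%N & meet_card L3 l == 1%N]]) => [/existsP //|/existsPn H].
exfalso.
set T := [set l : line K | incident P l].
pose a1 l := #|[set Q in L1 :\ P | incident Q l]|.
have m1E : forall l, incident P l -> meet_card L1 l = (a1 l).+1.
  move=> l iP; rewrite /meet_card (cardsD1 P) inE P1 iP add1n; congr (_.+1).
  by apply: eq_card => Q; rewrite !inE andbA.
have per : forall l, l \in T -> (q + 2 <= a1 l + meet_card L2 l + meet_card L3 l)%N.
  move=> l; rewrite inE => iP; have := H l; rewrite iP /= m1E //.
  have := b2 l; have := b3 l; have := g1 l; have := g2 l; have := g3 l.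
  rewrite m1E //. lia.
have S1 : (\sum_(l in T) a1 l = #|L1| - 1)%N.
  by rewrite sum_lines ?inE ?eqxx // (cardsD1 P L1) P1 add1n subn1.
have S2 : (\sum_(l in T) meet_card L2 l = #|L2|)%N by rewrite sum_lines.
have S3 : (\sum_(l in T) meet_card L3 l = #|L3|)%N by rewrite sum_lines.
have := leq_sum (index_enum _) per; rewrite sum_nat_const !big_split /= S1 S2 S3 card_lines_through.
have n1 : (1 < #|K|)%N := finNzRing_gt1 K.
move: s1 s2 s3 n1 q2; clear; set n := #|K|; set x1 := #|L1|; set x2 := #|L2|; set x3 := #|L3|.
move=> s1 s2 s3 n1 q2 E.
nia.
Qed.

Lemma rep_eq (K : finFieldType) (p : point K) w w' :
  represents p w -> represents p w' -> exists2 k, k != 0 & w = k *: w'.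
Proof.
case/repP => c c0 E; case/repP => c' c0' E'.
exists (c' / c); first by rewrite mulf_neq0 ?invr_eq0.
by rewrite mulrC -scalerA -E' E scalerA mulVf // scale1r.
Qed.

Lemma rep_dep (K : finFieldType) (p1 p2 : point K) w1 w2 k :
  represents p1 w1 -> represents p2 w2 -> w1 = k *: w2 -> p1 = p2.
Proof.
move=> r1 r2 E; rewrite E in r1; exact: rep_uniq (rep_scaleV r1) r2.
Qed.

Definition linset (K : finFieldType) (W : {set 'rV[K]_3}) : {set point K} :=
  [set p | [exists w in W, (w != 0) && represents p w]].

Lemma linset_line (K : finFieldType) (q : nat) (W : {set 'rV[K]_3}) :
  (q <= #|[set y : K | y ^+ q == y]|)%N ->
  (forall u v, u \in W -> v \in W -> u + v \in W) ->
  (forall (a : K) u, a ^+ q = a -> u \in W -> a *: u \in W) ->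
  forall l, (1 < meet_card (linset W) l -> q < meet_card (linset W) l)%N.
Proof.
move=> cF WD WZ l; rewrite /meet_card => /card_gt1P [p1 [p2 [i1 i2 p12]]].
move: i1 i2; rewrite !inE => /andP[/existsP[w1 /andP[w1W /andP[w10 r1]]] i1].
move=> /andP[/existsP[w2 /andP[w2W /andP[w20 r2]]] i2].
pose pt w := odflt p2 [pick p | represents p w].
have ptP : forall w, w != 0 -> represents (pt w) w.
  move=> w w0; rewrite /pt; case: pickP => [p //|none].
  by have [p rp] := rep_ex w0; move: (none p); rewrite rp.
have nz : forall a : K, w1 + a *: w2 != 0.
  move=> a; apply/eqP => E.
  have : p1 = p2.
    apply: (rep_dep r1 r2 (k := - a)).
    by rewrite scaleNr; apply/eqP; rewrite -addr_eq0 E.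
  by move=> e; rewrite e eqxx in p12.
set F := [set y : K | y ^+ q == y].
pose f a := pt (w1 + a *: w2).
have finj : {in F &, injective f}.
  move=> a b _ _ E.
  have ra : represents (f a) (w1 + a *: w2) := ptP _ (nz a).
  have rb : represents (f b) (w1 + b *: w2) := ptP _ (nz b); rewrite E in ra.
  have [k k0 Ek] := rep_eq ra rb.
  case: (eqVneq k 1) => [k1|k1].
    move: Ek; rewrite k1 scale1r => /addrI /eqP; rewrite -subr_eq0 -scalerBl.
    by rewrite scaler_eq0 (negbTE w20) orbF subr_eq0 => /eqP.
  have : (1 - k) *: w1 = (k * b - a) *: w2.
    apply/eqP; rewrite -subr_eq0; apply/eqP.
    transitivity ((w1 + a *: w2) - k *: (w1 + b *: w2)).
      by apply: row3P; rewrite !mxE; ring.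
    by rewrite Ek subrr.
  move=> E2; have E3 : w1 = ((k * b - a) / (1 - k)) *: w2.
    by rewrite mulrC -scalerA -E2 scalerA mulVf ?scale1r // subr_eq0 eq_sym.
  by have := rep_dep r1 r2 E3 => /eqP; rewrite (negbTE p12).
have fne : forall a, f a != p2.
  move=> a; apply/eqP => E; have ra : represents (f a) (w1 + a *: w2) := ptP _ (nz a).
  rewrite E in ra.
  have [k k0 Ek] := rep_eq ra r2.
  have E3 : w1 = (k - a) *: w2 by rewrite scalerBl -Ek addrK.
  by have := rep_dep r1 r2 E3 => /eqP; rewrite (negbTE p12).
have sub : p2 |: f @: F \subset [set p in linset W | incident p l].
  apply/subsetP => p; rewrite !inE => /orP[/eqP->|/imsetP[a aF ->]].
    by rewrite i2 andbT; apply/existsP; exists w2; rewrite w2W w20.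
  rewrite inE in aF; have ra := ptP _ (nz a).
  apply/andP; split.
    apply/existsP; exists (w1 + a *: w2); rewrite ra nz andbT.
    by rewrite andbT; apply: WD => //; apply: WZ => //; apply/eqP.
  rewrite (rep_inc _ ra) dotDl dotZl.
  rewrite (rep_inc _ r1) in i1; rewrite (rep_inc _ r2) in i2.
  by rewrite (eqP i1) (eqP i2) mulr0 addr0.
have p2f : p2 \notin f @: F by apply/imsetP => [[a _ E]]; move: (fne a); rewrite -E eqxx.
have := subset_leq_card sub; rewrite cardsU1 p2f (card_in_imset finj) add1n.
by move/(leq_trans _); apply; rewrite ltnS.
Qed.

Lemma linset_card (K : finFieldType) (q : nat) (W : {set 'rV[K]_3}) :
  (q <= #|[set y : K | y ^+ q == y]|)%N -> (0 < q)%N ->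
  (0 : 'rV[K]_3) \in W ->
  (forall (a : K) u, a ^+ q = a -> u \in W -> a *: u \in W) ->
  ((q - 1) * #|linset W| <= #|W| - 1)%N.
Proof.
move=> cF q0 W0 WZ.
set F := [set y : K | y ^+ q == y].
pose wp (p : point K) := odflt 0 [pick w in W | (w != 0) && represents p w].
have wpP : forall p, p \in linset W -> [/\ wp p \in W, wp p != 0 & represents p (wp p)].
  move=> p; rewrite inE => /existsP[w /andP[wW /andP[w0 rw]]].
  rewrite /wp; case: pickP => [w' /andP[w'W /andP[w'0 rw']] //|none].
  by move: (none w); rewrite wW w0 rw.
pose g (x : point K * K) := x.2 *: wp x.1.
have ginj : {in setX (linset W) (F :\ 0) &, injective g}.
  move=> [p a] [p' a'] /setXP[/= pL aF] /setXP[/= pL' aF']; rewrite /g /= => E.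
  have [W1 n1 r1] := wpP _ pL; have [W2 n2 r2] := wpP _ pL'.
  rewrite !inE in aF aF'; case/andP: aF => a0 _; case/andP: aF' => a0' _.
  have pp : p = p'.
    apply: (rep_uniq (w := a *: wp p)); first exact: rep_scale.
    by rewrite E; exact: rep_scale.
  rewrite -pp in E *; congr (_, _).
  have : (a - a') *: wp p == 0 by rewrite scalerBl E subrr.
  by rewrite scaler_eq0 (negbTE n1) orbF subr_eq0 => /eqP.
have sub : g @: setX (linset W) (F :\ 0) \subset W :\ 0.
  apply/subsetP => w /imsetP[[p a] /setXP[/= pL aF] ->]; rewrite /g /=.
  have [W1 n1 r1] := wpP _ pL; rewrite !inE in aF; case/andP: aF => a0 aq.
  by rewrite !inE scaler_eq0 negb_or a0 n1 /=; apply: WZ => //; apply/eqP.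
have := subset_leq_card sub; rewrite (card_in_imset ginj) cardsX (cardsD1 0 W) W0 add1n.
have cF0 : (q - 1 <= #|F :\ 0%R|)%N.
  move: cF; rewrite (cardsD1 0%R F) inE expr0n (negbTE (lt0n_neq0 q0)) eqxx add1n.
  by move=> h; rewrite leq_subLR add1n.
move=> H; rewrite subSS subn0; apply: leq_trans H.
by rewrite mulnC leq_mul2l; apply/orP; right; move: cF0; rewrite subn1.
Qed.

Lemma card_roots (K : finFieldType) (r : {poly K}) :
  r != 0 -> (#|[set x : K | root r x]| < size r)%N.
Proof.
move=> r0; rewrite cardE; apply: max_poly_roots => //; last exact: enum_uniq.
by apply/allP => x; rewrite mem_enum inE.
Qed.

Lemma geom_nat (q h : nat) : (0 < q)%N ->
  ((q - 1) * \sum_(i < h) q ^ i = q ^ h - 1)%N.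
Proof.
move=> q0; elim: h => [|h IH]; first by rewrite big_ord0 muln0 expn0.
rewrite big_ord_recr /= mulnDr IH expnSr.
have : (0 < q ^ h)%N by rewrite expn_gt0 q0.
move: (q ^ h)%N => t; nia.
Qed.

Lemma Fq_upper (K : finFieldType) (q : nat) : (1 < q)%N ->
  (#|[set y : K | y ^+ q == y]| <= q)%N.
Proof.
move=> q1.
set F := [set y : K | _].
have sub : F :\ 0 \subset [set x : K | root ('X^(q.-1) - 1) x].
  apply/subsetP => x; rewrite !inE => /andP[x0 /eqP xq].
  rewrite rootE !hornerE; apply/eqP; apply: (mulfI x0).
  rewrite mulrBr -exprS prednK ?(ltn_trans _ q1) // xq mulr1 subrr mulr0 //.
have := card_roots (r := 'X^(q.-1) - 1 : {poly K}).
rewrite -size_poly_eq0 size_Xn_sub_1 ?(ltn_trans _ (ltn_pred _)) //; last by move: q1; clear; lia.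
move=> /(_ isT) H.
have := leq_ltn_trans (subset_leq_card sub) H.
rewrite (cardsD1 0 F) inE expr0n (negbTE (lt0n_neq0 (ltnW q1))) eqxx add1n.
by rewrite prednK // (ltn_trans _ q1).
Qed.

Lemma Fq_lower (K : finFieldType) (q h : nat) : (1 < q)%N -> (0 < h)%N ->
  #|K| = (q ^ h)%N -> (q <= #|[set y : K | y ^+ q == y]|)%N.
Proof.
move=> q1 h0 cK.
set F := [set y : K | _].
set n := #|K|.
have n1 : (1 < n)%N := finNzRing_gt1 K.
set m := (\sum_(i < h) q ^ i)%N.
have mE : ((q - 1) * m = n - 1)%N by rewrite /m geom_nat ?(ltnW q1) // /n cK.
pose g : {poly K} := \sum_(j < m) 'X^((q - 1) * j).
have gE : ('X^(q - 1) - 1) * g = 'X^(n - 1) - 1.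
  by rewrite /g -mE exprM [RHS]subrX1; congr (_ * _); apply: eq_bigr => i _; rewrite exprM.
have n10 : (0 < n - 1)%N by move: n1; clear; lia.
have g0 : g != 0.
  apply/eqP => g0; move: gE; rewrite g0 mulr0 => /esym/eqP.
  by rewrite -size_poly_eq0 size_Xn_sub_1.
have sg : size g = (n - q + 1)%N.
  move: (congr1 (fun r : {poly K} => size r) gE); rewrite /= size_mul //; last first.
    by rewrite -size_poly_eq0 size_Xn_sub_1 // subn_gt0.
  rewrite !size_Xn_sub_1 ?subn_gt0 //.
  have : (q <= n)%N.
    by rewrite /n cK -{1}(expn1 q) leq_exp2l // (ltnW q1).
  move: q1 n1 (size g); clear; move=> q1 n1 s; lia.
have cr := card_roots g0; rewrite sg in cr.
have cov : [set: K] \subset F :|: [set x | root g x].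
  apply/subsetP => x _; rewrite !inE.
  case: (eqVneq x 0) => [->|x0]; first by rewrite expr0n (negbTE (lt0n_neq0 (ltnW q1))) eqxx.
  have xn : x ^+ (n - 1) = 1.
    apply: (mulfI x0); rewrite -exprS mulr1.
    by rewrite (_ : (n - 1).+1 = n)%N ?expf_card //; move: n1; clear; lia.
  have := congr1 (fun r : {poly K} => r.[x]) gE; rewrite /= hornerM !hornerE xn subrr.
  move/eqP; rewrite mulf_eq0 subr_eq0 => /orP[/eqP xq|gx]; last by rewrite rootE gx orbT.
  apply/orP; left; rewrite (_ : q = (q - 1).+1)%N; last by move: q1; clear; lia.
  by rewrite exprS xq mulr1.
have := subset_leq_card cov; rewrite cardsT -/n.
move=> H; have := leq_trans H (leq_card_setU _ _).
have qn : (q <= n)%N by rewrite /n cK -{1}(expn1 q) leq_exp2l // (ltnW q1).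
move: cr qn; clear -q1; move: #|F| #|[set x | root g x]| n => a b c; lia.
Qed.

Lemma frobD (K : finFieldType) (q h : nat) : prime_power q -> #|K| = (q ^ h)%N -> (0 < h)%N ->
  forall i (x y : K), (x + y) ^+ (q ^ i) = x ^+ (q ^ i) + y ^+ (q ^ i).
Proof.
move=> [p [k [pp [k0 ->]]]] cK h0 i x y.
have pc : p \in [pchar K] by apply: (card_finPcharP (n := (k * h)%N)) => //; rewrite cK expnM.
apply: exprDn_pchar; rewrite -expnM pnatX pnatE // pc //.
Qed.

Lemma trace0 (K : finFieldType) (q h : nat) : (0 < q)%N -> trace q h (0 : K) = 0.
Proof.
move=> q0; rewrite /trace big1 // => i _; rewrite expr0n.
by rewrite (negbTE (lt0n_neq0 _)) // expn_gt0 q0.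
Qed.

Lemma traceD (K : finFieldType) (q h : nat) : prime_power q -> #|K| = (q ^ h)%N -> (0 < h)%N ->
  forall x y : K, trace q h (x + y) = trace q h x + trace q h y.
Proof.
move=> pq cK h0 x y; rewrite /trace -big_split /=; apply: eq_bigr => i _.
exact: (frobD pq cK h0).
Qed.

Lemma expFq (K : finFieldType) (q : nat) (a : K) : a ^+ q = a -> forall i, a ^+ (q ^ i) = a.
Proof.
move=> aq; elim => [|i IH]; first by rewrite expn0 expr1.
by rewrite expnSr exprM IH.
Qed.

Lemma traceZ (K : finFieldType) (q h : nat) (a x : K) : a ^+ q = a ->
  trace q h (a * x) = a * trace q h x.
Proof.
move=> aq; rewrite /trace mulr_sumr; apply: eq_bigr => i _.
by rewrite exprMn (expFq aq).
Qed.

Definition Uset {K : finFieldType} (q h : nat) : {set 'rV[K]_3} :=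
  [set u | [exists x, [exists y, (y ^+ q == y) && (u == mk3 x (trace q h x) y)]]].

Definition Wset (K : finFieldType) (q h : nat) (A : 'M[K]_3) : {set 'rV[K]_3} :=
  [set u *m A | u in Uset q h].

Lemma mk3D (K : finFieldType) (a b c a' b' c' : K) :
  mk3 a b c + mk3 a' b' c' = mk3 (a + a') (b + b') (c + c').
Proof. by apply: row3P; rewrite !mxE. Qed.

Lemma mk3Z (K : finFieldType) (k a b c : K) : k *: mk3 a b c = mk3 (k * a) (k * b) (k * c).
Proof. by apply: row3P; rewrite !mxE. Qed.

Lemma mk30 (K : finFieldType) : mk3 (0 : K) 0 0 = 0.
Proof. by apply: row3P; rewrite !mxE. Qed.

Lemma W0 (K : finFieldType) (q h : nat) (A : 'M[K]_3) : (0 < q)%N -> (0 : 'rV[K]_3) \in Wset q h A.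
Proof.
move=> q0; apply/imsetP; exists 0; last by rewrite mul0mx.
rewrite inE; apply/existsP; exists 0; apply/existsP; exists 0.
by rewrite expr0n (negbTE (lt0n_neq0 q0)) eqxx trace0 // mk30 eqxx.
Qed.

Lemma WD (K : finFieldType) (q h : nat) (A : 'M[K]_3) : prime_power q -> #|K| = (q ^ h)%N -> (0 < h)%N ->
  forall u v, u \in Wset q h A -> v \in Wset q h A -> u + v \in Wset q h A.
Proof.
move=> pq cK h0 _ _ /imsetP[u uU ->] /imsetP[v vU ->].
apply/imsetP; exists (u + v); last by rewrite mulmxDl.
move: uU vU; rewrite !inE => /existsP[x /existsP[y /andP[yq /eqP->]]].
move=> /existsP[x' /existsP[y' /andP[yq' /eqP->]]].
apply/existsP; exists (x + x'); apply/existsP; exists (y + y').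
rewrite mk3D (traceD pq cK h0) eqxx andbT.
have := frobD pq cK h0 1 y y'; rewrite expn1 => ->.
by rewrite (eqP yq) (eqP yq').
Qed.

Lemma WZ (K : finFieldType) (q h : nat) (A : 'M[K]_3) :
  forall (a : K) u, a ^+ q = a -> u \in Wset q h A -> a *: u \in Wset q h A.
Proof.
move=> a _ aq /imsetP[u uU ->].
apply/imsetP; exists (a *: u); last by rewrite scalemxAl.
move: uU; rewrite !inE => /existsP[x /existsP[y /andP[yq /eqP->]]].
apply/existsP; exists (a * x); apply/existsP; exists (a * y).
by rewrite mk3Z traceZ // eqxx andbT exprMn aq (eqP yq).
Qed.

Lemma W_card (K : finFieldType) (q h : nat) (A : 'M[K]_3) :
  (#|Wset q h A| <= #|K| * #|[set y : K | y ^+ q == y]|)%N.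
Proof.
apply: leq_trans (leq_imset_card _ _) _.
pose f (x : K * K) := mk3 x.1 (trace q h x.1) x.2.
have -> : Uset q h = f @: setX [set: K] [set y : K | y ^+ q == y].
  apply/setP => u; rewrite inE; apply/existsP/imsetP.
    case=> x /existsP[y /andP[yq /eqP->]]; exists (x, y) => //.
    by apply/setXP; rewrite !inE.
  case=> [[x y]] /setXP[_]; rewrite inE => yq ->.
  by exists x; apply/existsP; exists y; rewrite yq eqxx.
by apply: leq_trans (leq_imset_card _ _) _; rewrite cardsX cardsT.
Qed.

Lemma std_lin (K : finFieldType) (q h : nat) (L : {set point K}) :
  (0 < q)%N -> proj_equiv_std q h L -> exists A : 'M[K]_3, L = linset (Wset q h A).
Proof.
move=> q0 [A [_ HA]]; exists A; apply/setP => p; rewrite inE; apply/idP/idP.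
  move/HA => [s]; rewrite inE => /existsP[x /existsP[y /and3P[yq xy rs]]] rp.
  case/repP: rs => c c0 E; rewrite E -scalemxAl in rp.
  have rp' := rep_scaleV rp.
  apply/existsP; exists (mk3 x (trace q h x) y *m A); rewrite (rep_neq0 rp') rp' andbT.
  rewrite andbT /Wset; apply/imsetP; exists (mk3 x (trace q h x) y) => //.
  by rewrite inE; apply/existsP; exists x; apply/existsP; exists y; rewrite yq eqxx.
rewrite /Wset; case/existsP => w /andP[/imsetP[u uU ->] /andP[w0 rw]]; apply/HA.
move: uU; rewrite inE => /existsP[x /existsP[y /andP[yq /eqP Eu]]].
have u0 : u != 0 by apply: contraNneq w0 => ->; rewrite mul0mx.
have [s rs] := rep_ex u0.
exists s.
  rewrite inE; apply/existsP; exists x; apply/existsP; exists y.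
  rewrite yq /=; apply/andP; split; last by rewrite /mk3 in Eu; rewrite -Eu.
  apply: contraNneq u0 => E0; case: E0 => ex ey; by rewrite Eu ex ey trace0 // mk30.
case/repP: rs => c c0 E; rewrite E -scalemxAl; exact: rep_scale.
Qed.

Lemma meet_union (K : finFieldType) (A B : {set point K}) (l : line K) :
  (forall p, p \in A -> p \notin B) ->
  meet_card (A :|: B) l = (meet_card A l + meet_card B l)%N.
Proof.
move=> dAB; rewrite /meet_card.
have -> : [set p in A :|: B | incident p l] =
          [set p in A | incident p l] :|: [set p in B | incident p l].
  by apply/setP => p; rewrite !inE andb_orl.
rewrite cardsU (_ : _ :&: _ = set0) ?cards0 ?subn0 //.
apply/setP => p; rewrite !inE; apply/negbTE; apply/negP => /andP[/andP[pA _] /andP[pB _]].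
by move: (dAB p pA); rewrite pB.
Qed.

Unset Implicit Arguments.

Theorem proposition2p12 (K : finFieldType) (q h : nat)
    (L1 L2 L3 : {set point K}) :
  prime_power q -> (2 < q)%N -> (2 <= h)%N -> #|K| = (q ^ h)%N ->
  [disjoint L1 & L2] -> [disjoint L1 & L3] -> [disjoint L2 & L3] ->
  blocking_set L1 -> blocking_set L2 -> blocking_set L3 ->
  proj_equiv_std q h L1 -> proj_equiv_std q h L2 -> proj_equiv_std q h L3 ->
  minimal_tfold_blocking 3 (L1 :|: L2 :|: L3).
Proof.
move=> pq q2 h2 cK d12 d13 d23 b1 b2 b3 e1 e2 e3.
have q1 : (1 < q)%N by apply: ltn_trans q2.
have q0 : (0 < q)%N by apply: ltnW.
have h0 : (0 < h)%N by apply: leq_trans h2.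
have cF : #|[set y : K | y ^+ q == y]| = q.
  by apply/eqP; rewrite eqn_leq Fq_upper // (Fq_lower q1 h0 cK).
have good : forall L : {set point K}, proj_equiv_std q h L ->
    (forall l, 1 < meet_card L l -> q < meet_card L l)%N /\
    ((q - 1) * #|L| <= #|K| * q - 1)%N.
  move=> L /(std_lin q0) [A ->]; split.
    apply: linset_line; [by rewrite cF | exact: WD | exact: WZ].
  apply: leq_trans (linset_card _ q0 (W0 h A q0) (@WZ K q h A)) _; first by rewrite cF.
  by rewrite leq_sub2r //; apply: leq_trans (W_card q h A) _; rewrite cF.
have [g1 s1] := good _ e1; have [g2 s2] := good _ e2; have [g3 s3] := good _ e3.
have d3 : forall p, p \in L1 :|: L2 -> p \notin L3.
  move=> p; rewrite inE => /orP[pL|pL]; first by rewrite (disjointFr d13 pL).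
  by rewrite (disjointFr d23 pL).
have d12' : forall p, p \in L1 -> p \notin L2 by move=> p pL; rewrite (disjointFr d12 pL).
have mE : forall l, meet_card (L1 :|: L2 :|: L3) l =
    (meet_card L1 l + meet_card L2 l + meet_card L3 l)%N.
  by move=> l; rewrite meet_union // meet_union.
split.
  by move=> l; rewrite mE; have := b1 l; have := b2 l; have := b3 l; lia.
move=> S' /properP [sub [P PS PS']] T3.
have [l /and4P[iP /eqP m1 /eqP m2 /eqP m3]] : exists l : line K, [&& incident P l,
    meet_card L1 l == 1%N, meet_card L2 l == 1%N & meet_card L3 l == 1%N].
  move: PS; rewrite !inE => /orP[/orP[pL|pL]|pL].
  - apply: (key q2 pL _ _ b2 b3 g1 g2 g3 s1 s2 s3).
      by rewrite (disjointFr d12 pL).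
    by rewrite (disjointFr d13 pL).
  - have [l /and4P[a b c d]] := key q2 pL (negbT (disjointFl d12 pL)) (negbT (disjointFr d23 pL))
        b1 b3 g2 g1 g3 s2 s1 s3.
    by exists l; rewrite a b c d.
  - have [l /and4P[a b c d]] := key q2 pL (negbT (disjointFl d13 pL)) (negbT (disjointFl d23 pL))
        b1 b2 g3 g1 g2 s3 s1 s2.
    by exists l; rewrite a b c d.
have mS : meet_card (L1 :|: L2 :|: L3) l = 3%N by rewrite mE m1 m2 m3.
have pr : [set p in S' | incident p l] \proper [set p in L1 :|: L2 :|: L3 | incident p l].
  apply/properP; split.
    by apply/subsetP => p; rewrite inE => /andP[pS ip]; rewrite inE (subsetP sub _ pS) ip.
  by exists P; [rewrite inE PS iP | rewrite inE (negbTE PS')].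
have := proper_card pr; rewrite -/(meet_card S' l) -/(meet_card _ l) mS.
by have := T3 l; lia.
Qed.
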